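(* Let $W^{(1)}$ be a pro-$p$ Coxeter group (notation as in the context) and let $M$ be a group (not necessarily commutative) endowed with an action of $W^{(1)}$ by group automorphisms, written $(g,m)\mapsto g(m)$. For a group $G$ acting on $M$ let $Z^1(G,M)$ be the set of maps $\phi:G\to M$ with $\phi(gg')=\phi(g)\,g(\phi(g'))$ for all $g,g'\in G$. Then the restriction map \[ Z^1(W^{(1)},M)\longrightarrow \mathrm{Hom}_{\mathrm{Set}}(S,M)\times Z^1(\Omega^{(1)},M),\qquad \phi\mapsto \big((s\mapsto \phi(n_s)),\ (u\mapsto\phi(u))\big) \] is injective, and its image consists exactly of the pairs $(\sigma,\rho)$ satisfying: (i) $\sigma(s)\, n_s(\sigma(s))=\rho(n_s^2)$ for all $s\in S$ (note $n_s^2\in T\subseteq\Omega^{(1)}$); (ii) for all $u\in\Omega^{(1)}$ and $s\in S$, \[ \rho(u)\cdot u(\sigma(s))=\sigma(u(s))\cdot n_{u(s)}\big(\rho(u\,t_{s,u})\big), \] where $u(s):=\pi(u)s\pi(u)^{-1}\in S$ and $t_{s,u}\in T$ is the element defined by $u n_s=n_{u(s)}\,u\,t_{s,u}$; (iii) for all $s,t\in S$ with $m(s,t)<\infty$, the following two products, each with $m(s,t)$ factors, are equal: \[ \sigma(s)\cdot n_s(\sigma(t))\cdot (n_sn_t)(\sigma(s))\cdot(n_sn_tn_s)(\sigma(t))\cdots = \sigma(t)\cdot n_t(\sigma(s))\cdot(n_tn_s)(\sigma(t))\cdot(n_tn_sn_t)(\sigma(s))\cdots . \]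
   Context: A Coxeter group $(W_{\mathrm{aff}},S)$ has length function $\ell$ with respect to $S$, and $m(s,t)\in\{1,2,\dots,\infty\}$ denotes the order of $st$. An extended Coxeter group is a group $W=W_{\mathrm{aff}}\rtimes\Omega$ where $W_{\mathrm{aff}}$ is a normal subgroup, $(W_{\mathrm{aff}},S)$ is a Coxeter group, and $\Omega\le W$ is a subgroup whose conjugation action on $W_{\mathrm{aff}}$ preserves $S$; the length is extended to $W$ by $\ell(wu)=\ell(w)$ for $w\in W_{\mathrm{aff}},u\in\Omega$. A pro-$p$ Coxeter group $W^{(1)}$ consists of an extended Coxeter group $W$, an abelian group $T$, a group extension $1\to T\to W^{(1)}\xrightarrow{\pi}W\to1$ (with $T\subseteq W^{(1)}$), and elements $n_s\in\pi^{-1}(s)$ for $s\in S$ satisfying the braid relations $n_sn_tn_s\cdots=n_tn_sn_t\cdots$ ($m(s,t)$ factors on each side) whenever $m(s,t)<\infty$. We write $\Omega^{(1)}:=\pi^{-1}(\Omega)$. *)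

(* Defs.v *)
From Stdlib Require Import List.
Import ListNotations.

Set Implicit Arguments.

Record group := Group {
  carrier :> Type;
  gmul : carrier -> carrier -> carrier;
  gone : carrier;
  ginv : carrier -> carrier;
  gmulA : forall x y z, gmul x (gmul y z) = gmul (gmul x y) z;
  gmul1l : forall x, gmul gone x = x;
  gmulVl : forall x, gmul (ginv x) x = gone }.

Arguments gmul {g} _ _.
Arguments gone {g}.
Arguments ginv {g} _.

Fixpoint gpow {G : group} (x : G) (k : nat) : G :=
  match k with 0 => gone | S k' => gmul x (gpow x k') end.

Fixpoint gprod {G : group} (l : list G) : G :=
  match l with [] => gone | x :: l' => gmul x (gprod l') end.

Definition has_order {G : group} (x : G) (k : nat) : Prop :=
  0 < k /\ gpow x k = gone /\ (forall j, 0 < j < k -> gpow x j <> gone).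

Fixpoint alt {G : group} (a b : G) (k : nat) : G :=
  match k with 0 => gone | S k' => gmul a (alt b a k') end.

Definition is_subgroup {G : group} (P : G -> Prop) : Prop :=
  P gone /\ (forall x y, P x -> P y -> P (gmul x y)) /\ (forall x, P x -> P (ginv x)).

Definition is_normal {G : group} (P : G -> Prop) : Prop :=
  forall g x, P x -> P (gmul (gmul g x) (ginv g)).

(** (Waff, S) is a Coxeter system, Waff a subgroup of W: S consists of
    involutions generating Waff, and Waff has the universal property of
    the Coxeter presentation < S | (st)^{m(s,t)} = 1 for m(s,t) < oo >. *)
Definition coxeter_system {W : group} (Waff S : W -> Prop) : Prop :=
  is_subgroup Waff /\
  (forall s, S s -> Waff s) /\
  (forall s, S s -> s <> gone /\ gmul s s = gone) /\
  (forall w, Waff w -> exists l : list W, Forall S l /\ w = gprod l) /\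
  (forall (H : group) (f : W -> H),
     (forall s t k, S s -> S t -> has_order (gmul s t) k ->
        gpow (gmul (f s) (f t)) k = gone) ->
     exists g : W -> H,
       (forall x y, Waff x -> Waff y -> g (gmul x y) = gmul (g x) (g y)) /\
       (forall s, S s -> g s = f s)).

(** Extended Coxeter group W = Waff ⋊ Omega, Omega preserving S by conjugation. *)
Definition extended_coxeter {W : group} (Waff Omega S : W -> Prop) : Prop :=
  coxeter_system Waff S /\
  is_normal Waff /\
  is_subgroup Omega /\
  (forall w, Waff w -> Omega w -> w = gone) /\
  (forall w, exists a u, Waff a /\ Omega u /\ w = gmul a u) /\
  (forall u s, Omega u -> S s -> S (gmul (gmul u s) (ginv u))).

Definition is_hom {G H : group} (f : G -> H) : Prop :=
  forall x y, f (gmul x y) = gmul (f x) (f y).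

Definition pro_p_coxeter {W1 W : group} (Waff Omega S : W -> Prop)
    (pi : W1 -> W) (n : W -> W1) : Prop :=
  extended_coxeter Waff Omega S /\
  is_hom pi /\
  (forall w, exists x, pi x = w) /\
  (forall x y, pi x = gone -> pi y = gone -> gmul x y = gmul y x) /\
  (forall s, S s -> pi (n s) = s) /\
  (forall s t k, S s -> S t -> has_order (gmul s t) k ->
     alt (n s) (n t) k = alt (n t) (n s) k).

Definition Tker {W1 W : group} (pi : W1 -> W) (x : W1) : Prop := pi x = gone.
Definition Omega1 {W1 W : group} (pi : W1 -> W) (Omega : W -> Prop) (x : W1) : Prop :=
  Omega (pi x).

Definition is_aut_action {G M : group} (act : G -> M -> M) : Prop :=
  (forall m, act gone m = m) /\
  (forall g h m, act (gmul g h) m = act g (act h m)) /\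
  (forall g m m', act g (gmul m m') = gmul (act g m) (act g m')).

(** phi is a 1-cocycle on the subgroup P of G (values outside P irrelevant) *)
Definition is_cocycle {G M : group} (act : G -> M -> M) (P : G -> Prop)
    (phi : G -> M) : Prop :=
  forall g g', P g -> P g' -> phi (gmul g g') = gmul (phi g) (act g (phi g')).

(** The product with k factors
    x · a(y) · (ab)(x) · (aba)(y) ...   i.e.  prod_{j<k} (alt a b j)(x or y) *)
Fixpoint cocyc_braid {G M : group} (act : G -> M -> M) (a b : G) (x y : M)
    (k : nat) : M :=
  match k with
  | 0 => gone
  | S k' => gmul (cocyc_braid act a b x y k')
                 (act (alt a b k') (if Nat.odd k' then y else x))
  end.

(* Main.v *)
Require Import Defs.
From Stdlib Require Import List ClassicalEpsilon ProofIrrelevance FunctionalExtensionality PropExtensionality PeanoNat.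
Import ListNotations.


Section GL.
Context {G : group}.
Implicit Types x y z a b : G.
Lemma mA x y z : gmul x (gmul y z) = gmul (gmul x y) z. Proof. apply gmulA. Qed.
Lemma m1l x : gmul gone x = x. Proof. apply gmul1l. Qed.
Lemma mVl x : gmul (ginv x) x = gone. Proof. apply gmulVl. Qed.
Lemma mVr x : gmul x (ginv x) = gone.
Proof.
  rewrite <- (m1l (gmul x (ginv x))).
  rewrite <- (mVl (ginv x)) at 1.
  rewrite <- mA, (mA (ginv x)), mVl, m1l, mVl. reflexivity.
Qed.
Lemma m1r x : gmul x gone = x.
Proof. rewrite <- (mVl x), mA, mVr, m1l. reflexivity. Qed.
Lemma mKl x y : gmul (ginv x) (gmul x y) = y.
Proof. rewrite mA, mVl, m1l. reflexivity. Qed.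
Lemma mKVl x y : gmul x (gmul (ginv x) y) = y.
Proof. rewrite mA, mVr, m1l. reflexivity. Qed.
Lemma mcanl x y z : gmul x y = gmul x z -> y = z.
Proof. intro H. rewrite <- (mKl x y), H, mKl. reflexivity. Qed.
Lemma mcanr x y z : gmul y x = gmul z x -> y = z.
Proof. intro H. rewrite <- (m1r y), <- (mVr x), mA, H, <- mA, mVr, m1r. reflexivity. Qed.
Lemma inv_uniq x y : gmul x y = gone -> y = ginv x.
Proof. intro H. apply (mcanl x). rewrite H, mVr. reflexivity. Qed.
Lemma inv_uniq' x y : gmul x y = gone -> x = ginv y.
Proof. intro H. apply (mcanr y). rewrite H, mVl. reflexivity. Qed.
Lemma ginvK x : ginv (ginv x) = x.
Proof. symmetry. apply inv_uniq. apply mVl. Qed.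
Lemma ginvM x y : ginv (gmul x y) = gmul (ginv y) (ginv x).
Proof. symmetry. apply inv_uniq. rewrite <- mA, (mA y), mVr, m1l, mVr. reflexivity. Qed.
Lemma ginv1 : ginv (@gone G) = gone.
Proof. symmetry. apply inv_uniq. apply m1l. Qed.
Lemma mKr x y : gmul (gmul y x) (ginv x) = y.
Proof. rewrite <- mA, mVr, m1r. reflexivity. Qed.
Lemma mKVr x y : gmul (gmul y (ginv x)) x = y.
Proof. rewrite <- mA, mVl, m1r. reflexivity. Qed.
Lemma gpowSr x k : gpow x (S k) = gmul (gpow x k) x.
Proof. induction k. simpl. rewrite m1l, m1r; auto. change (gmul x (gpow x (S k)) = gmul (gpow x (S k)) x). rewrite IHk at 1. rewrite mA. reflexivity. Qed.
Lemma altSr a b k : alt a b (S k) = gmul (alt a b k) (if Nat.odd k then b else a).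
Proof.
  revert a b; induction k; intros a b.
  - simpl. rewrite m1r, m1l. reflexivity.
  - change (alt a b (S (S k))) with (gmul a (alt b a (S k))).
    rewrite IHk. change (alt a b (S k)) with (gmul a (alt b a k)).
    rewrite mA. f_equal. rewrite Nat.odd_succ, <- Nat.negb_odd.
    destruct (Nat.odd k); reflexivity.
Qed.
Lemma conj_pow x y k : gmul x (gpow (gmul y x) k) = gmul (gpow (gmul x y) k) x.
Proof.
  induction k; simpl. rewrite m1l, m1r; auto.
  rewrite mA, (mA x y), <- (mA (gmul x y) x), IHk, mA. reflexivity.
Qed.
Lemma alt_pow a b k : gmul b b = gone -> gmul a a = gone ->
  alt a b k = gmul (gpow (gmul a b) k) (alt b a k).
Proof.
  revert a b; induction k; intros a b Hb Ha.
  - simpl. rewrite m1l. auto.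
  - change (alt a b (S k)) with (gmul a (alt b a k)).
    change (alt b a (S k)) with (gmul b (alt a b k)).
    rewrite (IHk b a Ha Hb).
    rewrite mA, conj_pow, gpowSr.
    rewrite <- !mA. f_equal. f_equal. rewrite mA, Hb, m1l. reflexivity.
Qed.
Lemma braid_pow a b k : gmul a a = gone -> gmul b b = gone ->
  alt a b k = alt b a k -> gpow (gmul a b) k = gone.
Proof.
  intros Ha Hb H. rewrite (alt_pow a b k Hb Ha) in H.
  rewrite <- (m1l (alt b a k)) in H at 2. apply mcanr in H. exact H.
Qed.
End GL.
Lemma conj_sq {G : group} (x g : G) :
  gmul (gmul (ginv x) (gmul (gmul (gmul x x) g) (ginv (gmul x x)))) x = gmul (gmul x g) (ginv x).
Proof. rewrite ginvM, <- !mA, mKl, mVl, m1r. reflexivity. Qed.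
Lemma conjM {G : group} (x a b : G) :
  gmul (gmul x (gmul a b)) (ginv x) = gmul (gmul (gmul x a) (ginv x)) (gmul (gmul x b) (ginv x)).
Proof. rewrite <- !mA, mKl. reflexivity. Qed.


Section SDP.
Context {H M : group} (act : H -> M -> M) (Hact : is_aut_action act).

Lemma act1 g : act g gone = gone.
Proof.
  destruct Hact as [_ [_ Hm]].
  apply (mcanl (act g gone)). rewrite <- Hm, !m1r. reflexivity.
Qed.
Lemma actV g m : act g (ginv m) = ginv (act g m).
Proof.
  destruct Hact as [_ [_ Hm]]. apply inv_uniq. rewrite <- Hm, mVr, act1. reflexivity.
Qed.

Definition sd_mul (e e' : M * H) : M * H :=
  (gmul (fst e) (act (snd e) (fst e')), gmul (snd e) (snd e')).
Definition sd_inv (e : M * H) : M * H :=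
  (act (ginv (snd e)) (ginv (fst e)), ginv (snd e)).
Lemma sd_assoc x y z : sd_mul x (sd_mul y z) = sd_mul (sd_mul x y) z.
Proof.
  destruct Hact as [H1 [Hc Hm]].
  destruct x as [a x], y as [b y], z as [c z]; unfold sd_mul; simpl.
  f_equal. rewrite Hm, Hc, mA. reflexivity. apply mA.
Qed.
Lemma sd_1l x : sd_mul (gone, gone) x = x.
Proof.
  destruct Hact as [H1 [Hc Hm]].
  destruct x as [a x]; unfold sd_mul; simpl. rewrite H1, !m1l. reflexivity.
Qed.
Lemma sd_Vl x : sd_mul (sd_inv x) x = (gone, gone).
Proof.
  destruct Hact as [H1 [Hc Hm]].
  destruct x as [a x]; unfold sd_mul, sd_inv; simpl.
  rewrite <- Hm, mVl, act1, mVl. reflexivity.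
Qed.
Definition sdp : group := @Group (prod M H) sd_mul (gone, gone) sd_inv sd_assoc sd_1l sd_Vl.
End SDP.

Section QUOT.
Context {G : group} (N : G -> Prop) (HN : is_subgroup N).

Definition Nz (x : G) : Prop :=
  (forall g, N g -> N (gmul (gmul x g) (ginv x))) /\
  (forall g, N g -> N (gmul (gmul (ginv x) g) x)).

Lemma N1 : N gone. Proof. apply HN. Qed.
Lemma NM x y : N x -> N y -> N (gmul x y). Proof. apply HN. Qed.
Lemma NV x : N x -> N (ginv x). Proof. apply HN. Qed.

Lemma Nz1 : Nz gone.
Proof. split; intros g Hg; rewrite ?ginv1, m1l, m1r; auto. Qed.
Lemma NzM x y : Nz x -> Nz y -> Nz (gmul x y).
Proof.
  intros [A1 A2] [B1 B2]; split; intros g Hg.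
  - rewrite ginvM. replace (gmul (gmul (gmul x y) g) (gmul (ginv y) (ginv x)))
      with (gmul (gmul x (gmul (gmul y g) (ginv y))) (ginv x)) by (rewrite !mA; reflexivity).
    auto.
  - rewrite ginvM. replace (gmul (gmul (gmul (ginv y) (ginv x)) g) (gmul x y))
      with (gmul (gmul (ginv y) (gmul (gmul (ginv x) g) x)) y) by (rewrite !mA; reflexivity).
    auto.
Qed.
Lemma NzV x : Nz x -> Nz (ginv x).
Proof. intros [A1 A2]; split; intros g Hg; rewrite ?ginvK; auto. Qed.
Lemma N_Nz x : N x -> Nz x.
Proof. intros Hx; split; intros g Hg; repeat apply NM; auto; apply NV; auto. Qed.

Definition coset (x : G) : G -> Prop := fun y => exists g, N g /\ y = gmul x g.

Lemma coset_eq x y : coset x = coset y <-> N (gmul (ginv x) y).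
Proof.
  split.
  - intro H. assert (coset y y) as Hy by (exists gone; split; [apply N1| rewrite m1r; auto]).
    rewrite <- H in Hy. destruct Hy as [g [Hg ->]]. rewrite mKl. auto.
  - intro H. apply functional_extensionality; intro z. apply propositional_extensionality.
    split; intros [g [Hg ->]].
    + exists (gmul (ginv (gmul (ginv x) y)) g). split. apply NM; auto. apply NV; auto.
      rewrite ginvM, ginvK, !mA, mVr, m1l. reflexivity.
    + exists (gmul (gmul (ginv x) y) g). split. apply NM; auto.
      rewrite !mA, mVr, m1l. reflexivity.
Qed.

Definition qcar := {P : G -> Prop | exists x, Nz x /\ P = coset x}.

Definition proj (x : G) : qcar :=
  match excluded_middle_informative (Nz x) with
  | left h => exist _ (coset x) (ex_intro _ x (conj h eq_refl))
  | right _ => exist _ (coset gone) (ex_intro _ gone (conj Nz1 eq_refl))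
  end.

Lemma proj_val x : Nz x -> proj1_sig (proj x) = coset x.
Proof. intro h. unfold proj. destruct (excluded_middle_informative (Nz x)); simpl; tauto. Qed.

Lemma qeq (P Q : qcar) : proj1_sig P = proj1_sig Q -> P = Q.
Proof.
  destruct P as [P hP], Q as [Q hQ]; simpl; intros ->. f_equal. apply proof_irrelevance.
Qed.

Lemma proj_eq x y : Nz x -> Nz y -> (proj x = proj y <-> N (gmul (ginv x) y)).
Proof.
  intros hx hy. rewrite <- coset_eq. split.
  - intro H. rewrite <- (proj_val x hx), <- (proj_val y hy), H. reflexivity.
  - intro H. apply qeq. rewrite (proj_val x hx), (proj_val y hy). auto.
Qed.

Lemma proj_surj (P : qcar) : exists x, Nz x /\ P = proj x.
Proof.
  destruct P as [P [x [hx e]]]. exists x. split; auto. apply qeq. rewrite proj_val; auto.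
Qed.

Definition rep (P : qcar) : G :=
  proj1_sig (constructive_indefinite_description _ (proj_surj P)).
Lemma rep_spec P : Nz (rep P) /\ P = proj (rep P).
Proof. unfold rep. destruct (constructive_indefinite_description _ _); simpl. auto. Qed.

Definition qmul (P Q : qcar) : qcar := proj (gmul (rep P) (rep Q)).
Definition qone : qcar := proj gone.
Definition qinv (P : qcar) : qcar := proj (ginv (rep P)).

Lemma proj_M x y : Nz x -> Nz y -> qmul (proj x) (proj y) = proj (gmul x y).
Proof.
  intros hx hy. unfold qmul.
  destruct (rep_spec (proj x)) as [h1 e1]. destruct (rep_spec (proj y)) as [h2 e2].
  set (a := rep (proj x)) in *. set (b := rep (proj y)) in *.
  apply proj_eq in e1; auto. apply proj_eq in e2; auto.
  apply proj_eq; try apply NzM; auto.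
  rewrite ginvM.
  replace (gmul (gmul (ginv b) (ginv a)) (gmul x y)) with
    (gmul (gmul (gmul (ginv b) (gmul (ginv a) x)) b) (gmul (ginv b) y))
    by (rewrite !mA, mKr; reflexivity).
  apply NM; auto. apply h2. apply NV in e1. rewrite ginvM, ginvK in e1. exact e1.
  apply NV in e2. rewrite ginvM, ginvK in e2. exact e2.
Qed.

Lemma proj_V x : Nz x -> qinv (proj x) = proj (ginv x).
Proof.
  intros hx. unfold qinv. destruct (rep_spec (proj x)) as [h1 e1].
  set (a := rep (proj x)) in *. apply proj_eq in e1; auto.
  apply proj_eq; try apply NzV; auto. rewrite ginvK.
  replace (gmul a (ginv x)) with (gmul (gmul a (gmul (ginv x) a)) (ginv a))
    by (rewrite !mA, mKr; reflexivity).
  apply (proj1 h1). exact e1.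
Qed.

Lemma q_assoc x y z : qmul x (qmul y z) = qmul (qmul x y) z.
Proof.
  destruct (proj_surj x) as [a [ha ->]]. destruct (proj_surj y) as [b [hb ->]].
  destruct (proj_surj z) as [c [hc ->]].
  rewrite !proj_M, mA; auto; apply NzM; auto.
Qed.
Lemma q_1l x : qmul qone x = x.
Proof.
  destruct (proj_surj x) as [a [ha ->]]. unfold qone. rewrite proj_M, m1l; auto. apply Nz1.
Qed.
Lemma q_Vl x : qmul (qinv x) x = qone.
Proof.
  destruct (proj_surj x) as [a [ha ->]]. unfold qone. rewrite proj_V, proj_M, mVl; auto.
  apply NzV; auto.
Qed.
Definition quot : group := @Group qcar qmul qone qinv q_assoc q_1l q_Vl.

Lemma proj_one_iff x : Nz x -> (proj x = qone <-> N x).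
Proof.
  intro hx. unfold qone. rewrite proj_eq; auto. 2: apply Nz1.
  split; intro H.
  - apply NV in H. rewrite ginvM, ginv1, m1l, ginvK in H. auto.
  - apply NV in H. rewrite m1r. auto.
Qed.
End QUOT.


Section MAIN.
Context (W1 W M : group) (Waff Omega S : W -> Prop)
    (pi : W1 -> W) (n : W -> W1) (act : W1 -> M -> M)
    (HW : pro_p_coxeter Waff Omega S pi n)
    (Hact : is_aut_action act).

Lemma Hpi : is_hom pi. Proof. apply HW. Qed.
Lemma pi1 : pi gone = gone.
Proof. apply (mcanl (pi gone)). rewrite <- Hpi, !m1r. reflexivity. Qed.
Lemma piV x : pi (ginv x) = ginv (pi x).
Proof. apply inv_uniq. rewrite <- Hpi, mVr, pi1. reflexivity. Qed.
Lemma piM x y : pi (gmul x y) = gmul (pi x) (pi y). Proof. apply Hpi. Qed.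
Lemma Hns s : S s -> pi (n s) = s. Proof. apply HW. Qed.
Lemma HWsub : is_subgroup Waff. Proof. apply HW. Qed.
Lemma HOm : is_subgroup Omega. Proof. apply HW. Qed.
Lemma HOS u s : Omega u -> S s -> S (gmul (gmul u s) (ginv u)). Proof. apply HW. Qed.
Lemma HSW s : S s -> Waff s. Proof. apply HW. Qed.

Lemma Om1_1 : Omega1 pi Omega gone.
Proof. unfold Omega1. rewrite pi1. apply HOm. Qed.
Lemma Om1_M x y : Omega1 pi Omega x -> Omega1 pi Omega y -> Omega1 pi Omega (gmul x y).
Proof. unfold Omega1. rewrite piM. apply HOm. Qed.
Lemma Om1_V x : Omega1 pi Omega x -> Omega1 pi Omega (ginv x).
Proof. unfold Omega1. rewrite piV. apply HOm. Qed.
Lemma T_Om1 t : Tker pi t -> Omega1 pi Omega t.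
Proof. unfold Tker, Omega1. intros ->. apply HOm. Qed.

Lemma act_1 m : act gone m = m. Proof. apply Hact. Qed.
Lemma act_M g h m : act (gmul g h) m = act g (act h m). Proof. apply Hact. Qed.
Lemma act_hom g m m' : act g (gmul m m') = gmul (act g m) (act g m'). Proof. apply Hact. Qed.

Lemma gprod_pi l : pi (gprod (map n l)) = gprod l -> True. Proof. auto. Qed.

Lemma pi_gprod l : Forall S l -> pi (gprod (map n l)) = gprod l.
Proof.
  induction 1; simpl. apply pi1. rewrite piM, IHForall, Hns; auto.
Qed.

Lemma decomp x : exists l u, Forall S l /\ Omega1 pi Omega u /\ x = gmul (gprod (map n l)) u.
Proof.
  destruct HW as [[[_ [_ [_ [Hgen _]]]] [_ [_ [_ [Hdec _]]]]] _].
  destruct (Hdec (pi x)) as [a [w [Ha [Hw Hx]]]].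
  destruct (Hgen a Ha) as [l [Hl ->]].
  exists l, (gmul (ginv (gprod (map n l))) x). split; auto. split.
  - unfold Omega1. rewrite piM, piV, pi_gprod, Hx, mKl; auto.
  - rewrite mKVl. reflexivity.
Qed.

Section COC.
Context (phi : W1 -> M) (Hphi : is_cocycle act (fun _ => True) phi).
Lemma phiM x y : phi (gmul x y) = gmul (phi x) (act x (phi y)). Proof. apply Hphi; auto. Qed.
Lemma phi1 : phi gone = gone.
Proof. pose proof (phiM gone gone) as H. rewrite m1l, act_1 in H. apply (mcanl (phi gone)). rewrite <- H, m1r. reflexivity. Qed.
Lemma phi_alt a b k : phi (alt a b k) = cocyc_braid act a b (phi a) (phi b) k.
Proof.
  induction k. apply phi1.
  rewrite altSr. simpl. rewrite phiM, IHk. destruct (Nat.odd k); reflexivity.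
Qed.
End COC.

Lemma inj_part (phi phi' : W1 -> M) :
     is_cocycle act (fun _ => True) phi ->
     is_cocycle act (fun _ => True) phi' ->
     (forall s, S s -> phi (n s) = phi' (n s)) ->
     (forall u, Omega1 pi Omega u -> phi u = phi' u) ->
     forall g, phi g = phi' g.
Proof.
  intros H1 H2 Hs Hu g.
  destruct (decomp g) as [l [u [Hl [Hu' ->]]]].
  rewrite (phiM _ H1), (phiM _ H2), (Hu u Hu'). f_equal.
  clear Hu'. induction Hl; simpl. rewrite (phi1 _ H1), (phi1 _ H2); auto.
  rewrite (phiM _ H1), (phiM _ H2), Hs, IHHl; auto.
Qed.


Lemma HSinv s : S s -> gmul s s = gone.
Proof. intro h. destruct HW as [[[_ [_ [H _]]] _] _]. apply H; auto. Qed.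
Lemma Hbraid s t k : S s -> S t -> has_order (gmul s t) k ->
     alt (n s) (n t) k = alt (n t) (n s) k.
Proof. apply HW. Qed.

Lemma tsu_eq u s : S s ->
  gmul (n (gmul (gmul (pi u) s) (ginv (pi u))))
    (gmul u (gmul (ginv (gmul (n (gmul (gmul (pi u) s) (ginv (pi u)))) u)) (gmul u (n s))))
  = gmul u (n s).
Proof. intros. rewrite mA, mKVl. reflexivity. Qed.

Lemma pi_tsu u s : Omega1 pi Omega u -> S s ->
  pi (gmul u (gmul (ginv (gmul (n (gmul (gmul (pi u) s) (ginv (pi u)))) u)) (gmul u (n s))))
  = pi u.
Proof.
  intros Hu Hs. rewrite !piM, piV, piM, !Hns; auto. 2: apply HOS; auto.
  rewrite mKVr, mVl, m1r. reflexivity.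
Qed.

Lemma fwd_part (sigma : W -> M) (rho : W1 -> M) (phi : W1 -> M) :
  is_cocycle act (fun _ => True) phi ->
  (forall s, S s -> phi (n s) = sigma s) ->
  (forall u, Omega1 pi Omega u -> phi u = rho u) ->
      ((forall s, S s ->
          gmul (sigma s) (act (n s) (sigma s)) = rho (gmul (n s) (n s))) /\
       (forall u s, Omega1 pi Omega u -> S s ->
          let us := gmul (gmul (pi u) s) (ginv (pi u)) in
          let tsu := gmul (ginv (gmul (n us) u)) (gmul u (n s)) in
          gmul (rho u) (act u (sigma s))
          = gmul (sigma us) (act (n us) (rho (gmul u tsu)))) /\
       (forall s t k, S s -> S t -> has_order (gmul s t) k ->
          cocyc_braid act (n s) (n t) (sigma s) (sigma t) k
          = cocyc_braid act (n t) (n s) (sigma t) (sigma s) k)).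
Proof.
  intros Hphi Hsig Hrho. split; [|split].
  - intros s Hs. rewrite <- Hrho, <- Hsig, <- phiM; auto.
    unfold Omega1. rewrite piM, Hns, HSinv; auto. apply HOm.
  - intros u s Hu Hs. cbv zeta.
    assert (Hus : S (gmul (gmul (pi u) s) (ginv (pi u)))) by (apply HOS; auto).
    rewrite <- (Hrho u Hu), <- (Hsig s Hs), <- (Hsig _ Hus), <- Hrho.
    + rewrite <- !phiM; auto. rewrite tsu_eq; auto.
    + unfold Omega1. rewrite pi_tsu; auto.
  - intros s t k Hs Ht Hk. rewrite <- !Hsig, <- !phi_alt; auto. f_equal. apply Hbraid; auto.
Qed.

End MAIN.


Section BWD.
Context (W1 W M : group) (Waff Omega S : W -> Prop)
    (pi : W1 -> W) (n : W -> W1) (act : W1 -> M -> M)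
    (HW : pro_p_coxeter Waff Omega S pi n)
    (Hact : is_aut_action act).
Context (sigma : W -> M) (rho : W1 -> M)
  (Hrho : is_cocycle act (Omega1 pi Omega) rho)
  (Hi : forall s, S s ->
          gmul (sigma s) (act (n s) (sigma s)) = rho (gmul (n s) (n s)))
  (Hii : forall u s, Omega1 pi Omega u -> S s ->
          let us := gmul (gmul (pi u) s) (ginv (pi u)) in
          let tsu := gmul (ginv (gmul (n us) u)) (gmul u (n s)) in
          gmul (rho u) (act u (sigma s))
          = gmul (sigma us) (act (n us) (rho (gmul u tsu))))
  (Hiii : forall s t k, S s -> S t -> has_order (gmul s t) k ->
          cocyc_braid act (n s) (n t) (sigma s) (sigma t) k
          = cocyc_braid act (n t) (n s) (sigma t) (sigma s) k).

Let Om1 := Omega1 pi Omega.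
Definition E : group := sdp act Hact.
Lemma sdmulE (e e' : E) : gmul e e' = (gmul (fst e) (act (snd e) (fst e')), gmul (snd e) (snd e')).
Proof. reflexivity. Qed.
Lemma sdoneE : (gone : E) = (gone, gone). Proof. reflexivity. Qed.

Lemma om1_1 : Om1 gone. Proof. eapply Om1_1; eauto. Qed.
Lemma om1_M x y : Om1 x -> Om1 y -> Om1 (gmul x y). Proof. eapply Om1_M; eauto. Qed.
Lemma om1_V x : Om1 x -> Om1 (ginv x). Proof. eapply Om1_V; eauto. Qed.
Lemma a_1 m : act gone m = m. Proof. apply Hact. Qed.
Lemma a_M g h m : act (gmul g h) m = act g (act h m). Proof. apply Hact. Qed.
Lemma a_hom g m m' : act g (gmul m m') = gmul (act g m) (act g m'). Proof. apply Hact. Qed.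
Lemma p_M x y : pi (gmul x y) = gmul (pi x) (pi y). Proof. eapply piM; eauto. Qed.
Lemma p_V x : pi (ginv x) = ginv (pi x). Proof. eapply piV; eauto. Qed.
Lemma p_1 : pi gone = gone. Proof. eapply pi1; eauto. Qed.
Lemma p_ns s : S s -> pi (n s) = s. Proof. eapply Hns; eauto. Qed.

Lemma rhoM u v : Om1 u -> Om1 v -> rho (gmul u v) = gmul (rho u) (act u (rho v)).
Proof. apply Hrho. Qed.
Lemma rho1 : rho gone = gone.
Proof.
  pose proof (rhoM gone gone om1_1 om1_1) as H.
  rewrite m1l, a_1 in H.
  apply (mcanl (rho gone)). rewrite <- H, m1r. reflexivity.
Qed.

Definition gt (u : W1) : E := (rho u, u).
Definition es (s : W) : E := (sigma s, n s).

Lemma gtM u v : Om1 u -> Om1 v -> gmul (gt u) (gt v) = gt (gmul u v).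
Proof. intros. rewrite sdmulE. unfold gt; simpl. rewrite rhoM; auto. Qed.
Lemma gt1 : gt gone = gone.
Proof. unfold gt. rewrite rho1. reflexivity. Qed.
Lemma gtV u : Om1 u -> ginv (gt u) = gt (ginv u).
Proof.
  intro h. symmetry. apply inv_uniq. rewrite gtM, mVr, gt1; auto.
  apply om1_V; auto.
Qed.

Definition Gam (e : E) : Prop := exists t, Tker pi t /\ e = gt t.

Lemma T1 : Tker pi gone. Proof. apply p_1. Qed.
Lemma TM x y : Tker pi x -> Tker pi y -> Tker pi (gmul x y).
Proof. unfold Tker. intros. rewrite p_M, H, H0, m1l. auto. Qed.
Lemma TV x : Tker pi x -> Tker pi (ginv x).
Proof. unfold Tker. intros. rewrite p_V, H, ginv1. auto. Qed.
Lemma TOm t : Tker pi t -> Om1 t. Proof. eapply T_Om1; eauto. Qed.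

Lemma Gam_sub : is_subgroup Gam.
Proof.
  split; [|split].
  - exists gone. split. apply T1. symmetry. apply gt1.
  - intros x y [t [Ht ->]] [t' [Ht' ->]]. exists (gmul t t'). split. apply TM; auto.
    apply gtM; apply TOm; auto.
  - intros x [t [Ht ->]]. exists (ginv t). split. apply TV; auto. apply gtV, TOm; auto.
Qed.


Definition usf u s := gmul (gmul (pi u) s) (ginv (pi u)).
Definition vf u s := gmul u (gmul (ginv (gmul (n (usf u s)) u)) (gmul u (n s))).

Lemma usf_S u s : Om1 u -> S s -> S (usf u s).
Proof. intros. unfold usf. eapply HOS; eauto. Qed.

Lemma pi_vf u s : Om1 u -> S s -> pi (vf u s) = pi u.
Proof. intros. unfold vf, usf. eapply pi_tsu; eauto. Qed.
Lemma om1_vf u s : Om1 u -> S s -> Om1 (vf u s).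
Proof. intros. unfold Om1, Omega1. rewrite pi_vf; auto. Qed.

Lemma L2 u s : Om1 u -> S s -> gmul (gt u) (es s) = gmul (es (usf u s)) (gt (vf u s)).
Proof.
  intros Hu Hs. rewrite !sdmulE. unfold gt, es; simpl. f_equal.
  - exact (Hii u s Hu Hs).
  - symmetry. unfold vf. eapply tsu_eq; eauto.
Qed.

Lemma es_sq s : S s -> gmul (es s) (es s) = gt (gmul (n s) (n s)).
Proof. intros Hs. rewrite sdmulE. unfold es, gt; simpl. rewrite Hi; auto. Qed.
Lemma T_nn s : S s -> Tker pi (gmul (n s) (n s)).
Proof. intros Hs. unfold Tker. rewrite p_M, p_ns; auto. eapply HSinv; eauto. Qed.
Lemma Gam_gt t : Tker pi t -> Gam (gt t).
Proof. intros; exists t; auto. Qed.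

Lemma Nz_es s : S s -> Nz Gam (es s).
Proof.
  intros Hs.
  assert (P2 : forall g, Gam g -> Gam (gmul (gmul (ginv (es s)) g) (es s))).
  { intros g [t [Ht ->]].
    pose proof (L2 t s (TOm t Ht) Hs) as L.
    assert (Hus : usf t s = s).
    { unfold usf. unfold Tker in Ht. rewrite Ht, m1l, ginv1, m1r. reflexivity. }
    rewrite Hus in L. rewrite <- mA, L, mKl. apply Gam_gt. unfold Tker.
    rewrite pi_vf; auto. apply TOm; auto. }
  split; auto.
  intros g Hg. rewrite <- conj_sq. apply P2. rewrite es_sq; auto.
  destruct Gam_sub as [_ [GM GV]].
  apply GM; [apply GM|]; auto. apply Gam_gt, T_nn; auto. apply GV. apply Gam_gt, T_nn; auto.
Qed.

Lemma Nz_gt t : Tker pi t -> Nz Gam (gt t).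
Proof. intros. apply (N_Nz Gam Gam_sub). apply Gam_gt; auto. Qed.

Definition Q : group := quot Gam Gam_sub.
Definition f (w : W) : Q := proj Gam (es w).

Lemma Nz_alt a b k : Nz Gam a -> Nz Gam b -> Nz Gam (alt a b k).
Proof.
  revert a b; induction k; intros a b ha hb. exact (Nz1 Gam). exact (NzM Gam _ _ ha (IHk b a hb ha)).
Qed.

Lemma proj_alt a b k : Nz Gam a -> Nz Gam b ->
  @alt Q (proj Gam a) (proj Gam b) k = proj Gam (alt a b k).
Proof.
  revert a b; induction k; intros a b ha hb. reflexivity.
  change (qmul Gam (proj Gam a) (@alt Q (proj Gam b) (proj Gam a) k) = proj Gam (gmul a (alt b a k))).
  rewrite IHk; auto. apply (proj_M Gam Gam_sub); [auto | apply Nz_alt; auto].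
Qed.

Lemma alt_E (e e' : E) k :
  alt e e' k = (cocyc_braid act (snd e) (snd e') (fst e) (fst e') k, alt (snd e) (snd e') k).
Proof.
  induction k. reflexivity.
  rewrite altSr, IHk, sdmulE. cbn [fst snd]. rewrite (altSr (snd e)). simpl.
  destruct (Nat.odd k); reflexivity.
Qed.

Lemma f_sq s : S s -> @gmul Q (f s) (f s) = gone.
Proof.
  intros Hs. change (qmul Gam (proj Gam (es s)) (proj Gam (es s)) = qone Gam).
  rewrite (proj_M Gam Gam_sub); try apply Nz_es; auto.
  apply (proj_one_iff Gam Gam_sub). apply NzM; apply Nz_es; auto. rewrite es_sq; auto.
  apply Gam_gt, T_nn; auto.
Qed.

Lemma f_rel s t k : S s -> S t -> has_order (gmul s t) k -> gpow (gmul (f s) (f t)) k = gone.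
Proof.
  intros Hs Ht Hk. apply braid_pow.
  - apply f_sq; auto.
  - apply f_sq; auto.
  - unfold f. rewrite !proj_alt; try apply Nz_es; auto. f_equal.
    rewrite !alt_E. unfold es; simpl. rewrite Hiii; auto. f_equal. eapply Hbraid; eauto.
Qed.

Section WITHG.
Notation EE := E.
Notation GG := Gam.
Notation HGG := Gam_sub.
Notation QQ := Q.
Notation ES := es.
Notation GT := gt.
Context (g : W -> QQ)
  (Hg_hom : forall x y, Waff x -> Waff y -> g (gmul x y) = gmul (g x) (g y))
  (Hg_s : forall s, S s -> g s = proj GG (ES s)).

Inductive A : EE -> Prop :=
| A_gen s : S s -> A (ES s)
| A_gam e : GG e -> A e
| A_mul a b : A a -> A b -> A (gmul a b).

Lemma W_1 : Waff gone. Proof. apply HWsub with (1 := HW). Qed.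
Lemma W_M x y : Waff x -> Waff y -> Waff (gmul x y). Proof. apply HWsub with (1 := HW). Qed.
Lemma W_V x : Waff x -> Waff (ginv x). Proof. apply HWsub with (1 := HW). Qed.

Lemma g1 : g gone = gone.
Proof.
  pose proof (Hg_hom gone gone W_1 W_1) as H. rewrite m1l in H.
  apply (mcanl (g gone)). rewrite <- H, m1r. reflexivity.
Qed.

Lemma A_Nz a : A a -> Nz GG a.
Proof.
  induction 1.
  - eapply Nz_es; eauto.
  - apply (N_Nz GG HGG); auto.
  - apply NzM; auto.
Qed.

Lemma A_W a : A a -> Waff (pi (snd a)).
Proof.
  induction 1.
  - simpl. rewrite p_ns; auto. apply HSW with (1 := HW); auto.
  - destruct H as [t [Ht ->]]. simpl. unfold Tker in Ht. rewrite Ht. apply W_1.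
  - rewrite sdmulE. simpl. rewrite p_M. apply W_M; auto.
Qed.

Lemma A_g a : A a -> proj GG a = g (pi (snd a)).
Proof.
  induction 1.
  - simpl. rewrite p_ns, Hg_s; auto.
  - pose proof H as H'. destruct H as [t [Ht ->]]. simpl. unfold Tker in Ht. rewrite Ht, g1.
    apply (proj_one_iff GG HGG). apply (N_Nz GG HGG); auto. auto.
  - rewrite <- (proj_M GG HGG); try apply A_Nz; auto.
    rewrite sdmulE. simpl. rewrite p_M, Hg_hom; try apply A_W; auto.
    rewrite IHA1, IHA2. reflexivity.
Qed.


Lemma A_one : A gone.
Proof. apply A_gam. exists gone. split. apply T1. symmetry. apply gt1. Qed.

Ltac om := first [assumption | apply om1_1 | apply om1_M; om | apply om1_V; om
  | apply TOm; assumption | apply om1_vf; om].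

Lemma A_conj u a : Om1 u -> A a -> A (gmul (gmul (gt u) a) (ginv (gt u))).
Proof.
  intros Hu. induction 1.
  - rewrite L2; auto. rewrite <- mA, gtV, gtM; try om.
    apply A_mul. apply A_gen. apply usf_S; auto.
    apply A_gam, Gam_gt. unfold Tker. rewrite p_M, p_V, pi_vf, mVr; auto.
  - destruct H as [t [Ht ->]]. rewrite gtV, !gtM; try om.
    apply A_gam, Gam_gt. unfold Tker. unfold Tker in Ht. rewrite !p_M, Ht, m1r, p_V, mVr. auto.
  - rewrite conjM. apply A_mul; auto.
Qed.

Lemma A_uniq a a' : A a -> A a' -> pi (snd a) = pi (snd a') -> Gam (gmul (ginv a) a').
Proof.
  intros Ha Ha' He. apply (proj_eq Gam Gam_sub); try apply A_Nz; auto.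
  rewrite !A_g; auto. rewrite He. reflexivity.
Qed.

Definition B (e : E) : Prop := exists a u, A a /\ Om1 u /\ e = gmul a (gt u).

Lemma B_mul e e' : B e -> B e' -> B (gmul e e').
Proof.
  intros [a [u [Ha [Hu ->]]]] [a' [u' [Ha' [Hu' ->]]]].
  exists (gmul a (gmul (gmul (gt u) a') (ginv (gt u)))), (gmul u u').
  split. apply A_mul; auto. apply A_conj; auto. split. apply om1_M; auto.
  rewrite <- gtM; auto. rewrite <- !mA. f_equal. rewrite !mA, mKVr. reflexivity.
Qed.

Lemma HWO w : Waff w -> Omega w -> w = gone.
Proof. destruct HW as [[_ [_ [_ [H _]]]] _]. apply H. Qed.

Lemma WO_split (x x' y y' : W) : Waff x -> Waff x' -> Omega y -> Omega y' ->
  gmul x y = gmul x' y' -> x = x' /\ y = y'.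
Proof.
  intros Hx Hx' Hy Hy' H.
  assert (E1 : gmul (ginv x') x = gmul y' (ginv y)).
  { apply (mcanl x'). apply (mcanr y). rewrite mKVl, <- (mA x'), mKVr. auto. }
  assert (E2 : gmul (ginv x') x = gone).
  { apply HWO. apply W_M; auto. apply W_V; auto. rewrite E1.
    assert (HO : is_subgroup Omega) by (eapply HOm; eauto). destruct HO as [_ [OM OV]]. auto. }
  assert (x = x').
  { apply (mcanl (ginv x')). rewrite E2, mVl. auto. }
  subst x'. split; auto. apply (mcanl x). auto.
Qed.

Lemma B_uniq e e' : B e -> B e' -> snd e = snd e' -> e = e'.
Proof.
  intros [a [u [Ha [Hu ->]]]] [a' [u' [Ha' [Hu' ->]]]] He.
  rewrite !sdmulE in He. simpl in He.
  assert (Hp := f_equal pi He). rewrite !p_M in Hp.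
  destruct (WO_split _ _ _ _ (A_W _ Ha) (A_W _ Ha') Hu Hu' Hp) as [Hpa _].
  destruct (A_uniq a a' Ha Ha' Hpa) as [t [Ht Hg]].
  assert (Ea : a' = gmul a (gt t)) by (rewrite <- Hg, mKVl; reflexivity).
  subst a'. rewrite sdmulE in He. simpl in He. rewrite <- mA in He. apply mcanl in He.
  rewrite <- mA, gtM; try om. rewrite <- He. reflexivity.
Qed.

Lemma A_gprod l : Forall S l -> A (gprod (map es l)) /\ snd (gprod (map es l)) = gprod (map n l).
Proof.
  induction 1; cbn [gprod map]. split; auto. apply A_one.
  destruct IHForall as [H1 H2]. split. apply A_mul; auto. apply A_gen; auto.
  rewrite sdmulE. simpl. f_equal. exact H2.
Qed.

Lemma B_ex x : exists e, B e /\ snd e = x.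
Proof.
  destruct (decomp _ _ _ _ _ _ _ HW x) as [l [u [Hl [Hu ->]]]].
  destruct (A_gprod l Hl) as [H1 H2].
  exists (gmul (gprod (map es l)) (gt u)). split.
  exists (gprod (map es l)), u. auto.
  rewrite sdmulE. simpl. f_equal. exact H2.
Qed.

Definition phi (x : W1) : M := fst (proj1_sig (constructive_indefinite_description _ (B_ex x))).

Lemma phi_spec e : B e -> phi (snd e) = fst e.
Proof.
  intros He. unfold phi. destruct (constructive_indefinite_description _ _) as [e' [He' Hs]].
  simpl. rewrite (B_uniq e' e); auto.
Qed.

Lemma phi_B x : exists e, B e /\ snd e = x /\ fst e = phi x.
Proof.
  destruct (B_ex x) as [e [He Hs]]. exists e. split; auto. split; auto.
  rewrite <- Hs, phi_spec; auto.
Qed.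

Lemma phi_coc : is_cocycle act (fun _ => True) phi.
Proof.
  intros x y _ _.
  destruct (phi_B x) as [e [He [<- Hx]]]. destruct (phi_B y) as [e' [He' [<- Hy]]].
  rewrite <- Hx, <- Hy.
  assert (H := phi_spec _ (B_mul _ _ He He')). rewrite sdmulE in H. simpl in H. exact H.
Qed.

Lemma phi_n s : S s -> phi (n s) = sigma s.
Proof.
  intros Hs. assert (B (es s)).
  { exists (es s), gone. split. apply A_gen; auto. split. apply om1_1. rewrite gt1, m1r. auto. }
  apply (phi_spec _ H).
Qed.

Lemma phi_om u : Om1 u -> phi u = rho u.
Proof.
  intros Hu. assert (B (gt u)).
  { exists gone, u. split. apply A_one. split; auto. rewrite m1l. auto. }
  apply (phi_spec _ H).
Qed.

End WITHG.

Lemma bwd_exists : exists phi0 : W1 -> M,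
  is_cocycle act (fun _ => True) phi0 /\
  (forall s, S s -> phi0 (n s) = sigma s) /\
  (forall u, Omega1 pi Omega u -> phi0 u = rho u).
Proof.
  pose proof HW as HW'. destruct HW' as [[[_ [_ [_ [_ Huniv]]]] _] _].
  destruct (Huniv Q f f_rel) as [g [Hgh Hgs]].
  exists phi. split; [|split].
  - exact (phi_coc g Hgh Hgs).
  - exact (phi_n g Hgh Hgs).
  - exact (phi_om g Hgh Hgs).
Qed.
End BWD.


Theorem lemma2p2p1 (W1 W M : group) (Waff Omega S : W -> Prop)
    (pi : W1 -> W) (n : W -> W1) (act : W1 -> M -> M)
    (HW : pro_p_coxeter Waff Omega S pi n)
    (Hact : is_aut_action act) :
  (* injectivity of the restriction map *)
  (forall phi phi' : W1 -> M,
     is_cocycle act (fun _ => True) phi ->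
     is_cocycle act (fun _ => True) phi' ->
     (forall s, S s -> phi (n s) = phi' (n s)) ->
     (forall u, Omega1 pi Omega u -> phi u = phi' u) ->
     forall g, phi g = phi' g) /\
  (* description of the image *)
  (forall (sigma : W -> M) (rho : W1 -> M),
     is_cocycle act (Omega1 pi Omega) rho ->
     ((exists phi : W1 -> M,
         is_cocycle act (fun _ => True) phi /\
         (forall s, S s -> phi (n s) = sigma s) /\
         (forall u, Omega1 pi Omega u -> phi u = rho u))
      <->
      ((* (i) *)
       (forall s, S s ->
          gmul (sigma s) (act (n s) (sigma s)) = rho (gmul (n s) (n s))) /\
       (* (ii) *)
       (forall u s, Omega1 pi Omega u -> S s ->
          let us := gmul (gmul (pi u) s) (ginv (pi u)) in
          let tsu := gmul (ginv (gmul (n us) u)) (gmul u (n s)) in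
          gmul (rho u) (act u (sigma s))
          = gmul (sigma us) (act (n us) (rho (gmul u tsu)))) /\
       (* (iii) *)
       (forall s t k, S s -> S t -> has_order (gmul s t) k ->
          cocyc_braid act (n s) (n t) (sigma s) (sigma t) k
          = cocyc_braid act (n t) (n s) (sigma t) (sigma s) k)))).
Proof.
  split.
  - intros phi phi' H1 H2 Hs Hu g. eapply inj_part; eauto.
  - intros sigma rho Hrho. split.
    + intros [phi0 [Hc [Hs Hu]]]. eapply fwd_part; eauto.
    + intros [Hi [Hii Hiii]]. eapply bwd_exists; eauto.
Qed.
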